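(* Let $\sigma(u)=(u+1)\,\omega(u+1)$ for $u\ge 0$, where $\omega$ is the Buchstab function. Then for every integer $n\ge 1$ and every real $y\in[0,1]$, $$\sigma(n-y)=\sigma(n)+\sum_{j=1}^{n-1}(-1)^j\,\sigma(n-j)\,M_{j,n}(y).$$
   Context: The Buchstab function $\omega:[1,\infty)\to\mathbb{R}$ is the continuous function with $u\,\omega(u)=1$ for $u\in[1,2]$ and $u\,\omega'(u)=\omega(u-1)-\omega(u)$ for $u>2$. For integers $n>j>0$ and real $y\in[0,1]$ define $$M_{j,n}(y)=\sum_{n_1>n_2>\cdots>n_j>0}\ \prod_{i=1}^{j}\frac{z_i^{n_i}}{n_i},\qquad z_1=\frac{y}{n},\quad z_i=\frac{n+2-i}{n+1-i}\ \text{for } 1<i\le j,$$ the sum running over integers $n_1,\dots,n_j$. *)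

(* Defs.v *)
From Stdlib Require Import Reals Lra List.
From Coquelicot Require Import Coquelicot.
Open Scope R_scope.

(* Characterization of the Buchstab function omega on [1, +oo):
   - continuous on [1, +oo) (as a function restricted to that domain),
   - u * omega u = 1 for u in [1,2],
   - u * omega'(u) = omega(u-1) - omega(u) for u > 2.
   Values of omega below 1 are irrelevant. *)
Definition is_buchstab (omega : R -> R) : Prop :=
  (forall u, 1 <= u -> limit1_in omega (fun x => 1 <= x) (omega u) u) /\
  (forall u, 1 <= u <= 2 -> u * omega u = 1) /\
  (forall u, 2 < u -> derivable_pt_lim omega u ((omega (u - 1) - omega u) / u)).

Definition sigmaB (omega : R -> R) (u : R) : R := (u + 1) * omega (u + 1).

(* sum_{i = a}^{b} f i  (zero if b < a) *)
Definition sum_range (a b : nat) (f : nat -> R) : R :=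
  fold_right Rplus 0 (map f (seq a (S b - a))).

(* nested zs m = sum over m > a_1 > a_2 > ... > a_k > 0 of
   prod_i zs_i^{a_i} / a_i, where k = length zs (finite sum). *)
Fixpoint nested (zs : list R) (m : nat) : R :=
  match zs with
  | nil => 1
  | z :: zs' => sum_range 1 (m - 1) (fun a => z ^ a / INR a * nested zs' a)
  end.

Definition z_tail (j n : nat) : list R :=
  map (fun i => (INR n + 2 - INR i) / (INR n + 1 - INR i)) (seq 2 (j - 1)).

(* M_{j,n}(y) = sum_{n_1 > n_2 > ... > n_j > 0} prod_i z_i^{n_i}/n_i
   with z_1 = y/n: the outermost index n_1 ranges over all integers >= 1
   (an infinite series of nonnegative terms), the inner ones are finite. *)
Definition M (j n : nat) (y : R) : R :=
  Series (fun n1 : nat =>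
    if (n1 =? 0)%nat then 0
    else (y / INR n) ^ n1 / INR n1 * nested (z_tail j n) n1).

(* Main.v *)
Require Import Defs.
From Stdlib Require Import Reals Lra Lia List.
From Coquelicot Require Import Coquelicot.
Open Scope R_scope.

Definition lsum (f : nat -> R) (l : list nat) := fold_right Rplus 0 (map f l).

Lemma lsum_app f l1 l2 : lsum f (l1 ++ l2) = lsum f l1 + lsum f l2.
Proof. unfold lsum; induction l1; simpl; [ring|rewrite IHl1; ring]. Qed.

Lemma lsum_bound f l B : (forall a, In a l -> 0 <= f a <= B) ->
  0 <= lsum f l <= INR (length l) * B.
Proof.
  unfold lsum; induction l as [|a l IH]; intros H; cbn [fold_right map length]; [simpl; lra|].
  assert (Ha := H a (or_introl eq_refl)).
  assert (IH' := IH (fun b Hb => H b (or_intror Hb))).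
  rewrite S_INR; lra.
Qed.

Lemma lsum_ext f g l : (forall a, In a l -> f a = g a) -> lsum f l = lsum g l.
Proof.
  unfold lsum; induction l as [|a l IH]; intros H; simpl; [lra|].
  rewrite H by now left. rewrite IH; auto. intros; apply H; now right.
Qed.

Lemma lsum_0 f l : (forall a, In a l -> f a = 0) -> lsum f l = 0.
Proof.
  intros H; rewrite (lsum_ext f (fun _ => 0)) by (intros; apply H; auto).
  clear H; unfold lsum; induction l; simpl; [lra| rewrite IHl; lra].
Qed.

Lemma lsum_derive (F F' : nat -> R -> R) l y :
  (forall a, In a l -> is_derive (F a) y (F' a y)) ->
  is_derive (fun t => lsum (fun a => F a t) l) y (lsum (fun a => F' a y) l).
Proof.
  unfold lsum; induction l as [|a l IH]; intros H; simpl.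
  - apply is_derive_Reals, derivable_pt_lim_const.
  - assert (H1 : is_derive (F a) y (F' a y)) by (apply H; now left).
    assert (H2 := IH (fun b Hb => H b (or_intror Hb))).
    exact (is_derive_plus _ _ _ _ _ H1 H2).
Qed.

Lemma lsum_scal c f l : c * lsum f l = lsum (fun a => c * f a) l.
Proof. unfold lsum; induction l; simpl; [ring| rewrite <- IHl; ring]. Qed.

Lemma lsum_shift f m : lsum f (seq 2 m) = lsum (fun a => f (S a)) (seq 1 m).
Proof. unfold lsum. rewrite <- seq_shift, map_map. reflexivity. Qed.

Lemma sum_range_1 m f : sum_range 1 m f = lsum f (seq 1 m).
Proof. unfold sum_range, lsum. replace (S m - 1)%nat with m by lia. reflexivity. Qed.

Lemma INR_pred n : (1 <= n)%nat -> INR (n - 1) = INR n - 1.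
Proof. intros; rewrite minus_INR by lia; simpl; ring. Qed.

Lemma ZT j n : (1 <= n)%nat ->
  z_tail (S (S j)) n = (INR n / (INR n - 1)) :: z_tail (S j) (n - 1).
Proof.
  intros Hn. unfold z_tail.
  replace (S (S j) - 1)%nat with (S j) by lia.
  replace (S j - 1)%nat with j by lia.
  cbn [seq map]. f_equal.
  - f_equal; simpl; ring.
  - rewrite <- seq_shift, map_map. apply map_ext. intros i.
    rewrite INR_pred by lia. rewrite S_INR. f_equal; ring.
Qed.

Lemma ZT1 n : z_tail 1 n = nil.
Proof. reflexivity. Qed.

Lemma nested_cons z zs k : nested (z :: zs) k =
  lsum (fun a => z ^ a / INR a * nested zs a) (seq 1 (k - 1)).
Proof. simpl. apply sum_range_1. Qed.

Lemma NB j n k : (S j + 1 <= n)%nat ->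
  0 <= nested (z_tail (S j) n) k <= INR k ^ j * (INR n / (INR n - INR j)) ^ k.
Proof.
  revert n k; induction j as [|j IH]; intros n k Hn.
  - rewrite ZT1. simpl nested. replace (INR n - INR 0) with (INR n) by (simpl; ring).
    assert (0 < INR n) by (apply lt_0_INR; lia).
    replace (INR n / INR n) with 1 by (field; lra). rewrite pow1. simpl; lra.
  - rewrite ZT by lia. rewrite nested_cons.
    set (q := INR n / (INR n - INR (S j))).
    assert (Hn1 : INR (n - 1) = INR n - 1) by (apply INR_pred; lia).
    assert (HjS : INR (S j) = INR j + 1) by apply S_INR.
    assert (Hjn : INR (S j) + 1 <= INR n) by (rewrite <- S_INR; apply le_INR; lia).
    assert (Hj0 : 0 <= INR j) by apply pos_INR.
    assert (Hq1 : 1 <= q).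
    { unfold q. apply (Rmult_le_reg_r (INR n - INR (S j))); [lra|].
      field_simplify; lra. }
    assert (Hk : INR (k - 1) <= INR k) by (apply le_INR; lia).
    assert (B := lsum_bound (fun a => (INR n / (INR n - 1)) ^ a / INR a *
       nested (z_tail (S j) (n - 1)) a) (seq 1 (k - 1)) (INR k ^ j * q ^ k)).
    rewrite length_seq in B.
    assert (0 <= INR k ^ j * q ^ k).
    { apply Rmult_le_pos; apply pow_le; [apply pos_INR|lra]. }
    assert (PB : forall a : nat, In a (seq 1 (k - 1)) ->
      0 <= (INR n / (INR n - 1)) ^ a / INR a * nested (z_tail (S j) (n - 1)) a <=
      INR k ^ j * q ^ k).
    { intros a Ha. apply in_seq in Ha.
      assert (Ha1 : 1 <= INR a) by (apply (le_INR 1); lia).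
      assert (Hak : INR a <= INR k) by (apply le_INR; lia).
      destruct (IH (n - 1)%nat a ltac:(lia)) as [I1 I2].
      rewrite Hn1 in I2.
      replace (INR n - 1 - INR j) with (INR n - INR (S j)) in I2 by lra.
      assert (Hz : 0 <= INR n / (INR n - 1)).
      { apply Rdiv_le_0_compat; lra. }
      assert (Hza : 0 <= (INR n / (INR n - 1)) ^ a / INR a).
      { apply Rdiv_le_0_compat; [apply pow_le|]; lra. }
      split; [apply Rmult_le_pos; auto|].
      apply Rle_trans with ((INR n / (INR n - 1)) ^ a * (INR a ^ j * ((INR n - 1) / (INR n - INR (S j))) ^ a)).
      { apply Rmult_le_compat; auto.
        unfold Rdiv. rewrite <- (Rmult_1_r ((INR n * / (INR n - 1)) ^ a)) at 2.
        apply Rmult_le_compat_l; [apply pow_le; lra|].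
        rewrite <- Rinv_1. apply Rinv_le_contravar; lra. }
      rewrite Rmult_comm, Rmult_assoc, <- Rpow_mult_distr.
      replace ((INR n - 1) / (INR n - INR (S j)) * (INR n / (INR n - 1))) with q
        by (unfold q; field; lra).
      apply Rmult_le_compat; [apply pow_le; lra|apply pow_le; lra| |].
      * apply pow_incr; lra.
      * apply Rle_pow; [lra|lia]. }
    destruct (B PB) as [B1 B2]. split; [exact B1|].
      apply Rle_trans with (INR k * (INR k ^ j * q ^ k)).
      { apply Rle_trans with (1 := B2). apply Rmult_le_compat_r; lra. }
      simpl; lra.
Qed.

Lemma bern k x : 0 <= x -> 1 + INR k * x <= (1 + x) ^ k.
Proof.
  intros Hx; induction k; [simpl; lra|]. cbn [pow].
  rewrite S_INR.
  assert (0 <= INR k * x * x) by (apply Rmult_le_pos; [apply Rmult_le_pos; [apply pos_INR|]|]; lra).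
  nra.
Qed.

Lemma bern2 m x : 0 <= x -> (1 - INR m * x) * (1 + x) ^ m <= 1.
Proof.
  intros Hx; induction m; [simpl; lra|]. cbn [pow].
  rewrite S_INR.
  assert (0 <= (1 + x) ^ m) by (apply pow_le; lra).
  assert (1 <= (1 + x) ^ m) by (apply pow_R1_Rle; lra).
  nra.
Qed.

Lemma poly_geo m : exists C, forall k, INR k ^ m * (2/3) ^ k <= C.
Proof.
  set (d := INR (3 * m + 3)).
  assert (Hd : d = 3 * INR m + 3) by (unfold d; rewrite plus_INR, mult_INR; simpl; ring).
  assert (Hm : 0 <= INR m) by apply pos_INR.
  set (x := / d).
  assert (Hx : 0 < x) by (unfold x; apply Rinv_0_lt_compat; lra).
  assert (Hdx : d * x = 1) by (unfold x; field; lra).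
  assert (Hmx : INR m * x <= 1/3).
  { unfold x; rewrite Hd. apply (Rmult_le_reg_r (3 * INR m + 3)); [lra|].
    field_simplify; lra. }
  assert (H1 : (1 + x) ^ m <= 3/2).
  { assert (B := bern2 m x ltac:(lra)). assert (0 <= (1+x)^m) by (apply pow_le; lra). nra. }
  exists (d ^ m). intros k.
  assert (Hk : INR k <= d * (1 + x) ^ k).
  { assert (B := bern k x ltac:(lra)).
    assert (0 <= INR k) by apply pos_INR.
    apply Rle_trans with (d * (1 + INR k * x)); [|apply Rmult_le_compat_l; lra].
    nra. }
  apply Rle_trans with ((d * (1 + x) ^ k) ^ m * (2/3) ^ k).
  { apply Rmult_le_compat_r; [apply pow_le; lra|]. apply pow_incr; split; [apply pos_INR|auto]. }
  rewrite Rpow_mult_distr, <- pow_mult, Nat.mul_comm, pow_mult, Rmult_assoc, <- Rpow_mult_distr.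
  rewrite <- (Rmult_1_r (d ^ m)) at 2. apply Rmult_le_compat_l; [apply pow_le; lra|].
  apply Rle_trans with (1 ^ k); [|rewrite pow1; lra]. apply pow_incr. assert (0 <= (1+x)^m) by (apply pow_le; lra). split; [apply Rmult_le_pos; lra|lra].
Qed.

Definition A (j n k : nat) : R :=
  match k with O => 0 | S _ => (/ INR n) ^ k / INR k * nested (z_tail j n) k end.

Lemma M_PS j n y : M j n y = PSeries (A j n) y.
Proof.
  unfold M, PSeries. apply Series_ext. intros [|k].
  - change ((0 =? 0)%nat) with true. unfold A. cbv iota. rewrite Rmult_0_l. reflexivity.
  - change ((S k =? 0)%nat) with false. cbv iota. unfold A.
    replace (y / INR n) with (y * / INR n) by reflexivity. rewrite Rpow_mult_distr. unfold Rdiv. ring.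
Qed.

Lemma A_bound j n : (S j + 1 <= n)%nat ->
  exists C, forall k, Rabs (A (S j) n k * (4/3) ^ k) <= C.
Proof.
  intros Hn. destruct (poly_geo j) as [C HC].
  exists (Rmax 0 C). intros [|k].
  - unfold A. rewrite Rmult_0_l, Rabs_R0. apply Rmax_l.
  - apply Rle_trans with (2 := Rmax_r 0 C).
    apply Rle_trans with (2 := HC (S k)).
    destruct (NB j n (S k) Hn) as [N1 N2].
    assert (Hn0 : INR (S j) + 1 <= INR n) by (rewrite <- S_INR; apply le_INR; lia).
    rewrite S_INR in Hn0. assert (0 <= INR j) by apply pos_INR.
    assert (Hk : 1 <= INR (S k)) by (apply (le_INR 1); lia).
    unfold A. set (K := INR (S k)) in *. set (N := nested _ _) in *.
    assert (0 <= (/ INR n) ^ S k / K * N * (4 / 3) ^ S k).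
    { assert (0 < / INR n) by (apply Rinv_0_lt_compat; lra).
      assert (0 <= (/ INR n) ^ S k) by (apply pow_le; lra).
      assert (0 <= (4/3) ^ S k) by (apply pow_le; lra).
      assert (0 <= (/ INR n) ^ S k / K) by (apply Rdiv_le_0_compat; lra).
      apply Rmult_le_pos; [apply Rmult_le_pos|]; lra. }
    rewrite Rabs_pos_eq by auto.
    apply Rle_trans with ((/ INR n) ^ S k * N * (4 / 3) ^ S k).
    { apply Rmult_le_compat_r; [apply pow_le; lra|].
      apply Rmult_le_compat_r; [lra|].
      unfold Rdiv. rewrite <- (Rmult_1_r ((/ INR n) ^ S k)) at 2.
      apply Rmult_le_compat_l; [apply pow_le; apply Rlt_le, Rinv_0_lt_compat; lra|].
      rewrite <- Rinv_1. apply Rinv_le_contravar; lra. }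
    apply Rle_trans with ((/ INR n) ^ S k * (K ^ j * (INR n / (INR n - INR j)) ^ S k) * (4 / 3) ^ S k).
    { apply Rmult_le_compat_r; [apply pow_le; lra|].
      apply Rmult_le_compat_l; [apply pow_le; apply Rlt_le, Rinv_0_lt_compat; lra|lra]. }
    replace ((/ INR n) ^ S k * (K ^ j * (INR n / (INR n - INR j)) ^ S k) * (4 / 3) ^ S k)
      with (K ^ j * (4/3 / (INR n - INR j)) ^ S k).
    2:{ replace (4 / 3 / (INR n - INR j)) with (/ INR n * (INR n / (INR n - INR j)) * (4/3)) by (field; lra).
        rewrite !Rpow_mult_distr. unfold Rdiv. ring. }
    apply Rmult_le_compat_l; [apply pow_le; lra|].
    apply pow_incr. split.
    + apply Rdiv_le_0_compat; lra.
    + apply (Rmult_le_reg_r (INR n - INR j)); [lra|]. field_simplify; lra.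
Qed.

Lemma A_radius j n : (S j + 1 <= n)%nat -> Rbar_le (4/3) (CV_radius (A (S j) n)).
Proof.
  intros Hn. destruct (CV_radius_bounded (A (S j) n)) as [Hub _].
  apply Hub. apply A_bound; auto.
Qed.

Definition delta (k : nat) : R := match k with O => 1 | S _ => 0 end.

Lemma PSeries_delta y : PSeries delta y = 1.
Proof.
  apply is_series_unique. unfold is_series.
  apply (filterlim_ext (fun _ => 1)); [|apply filterlim_const].
  intros N. induction N.
  - rewrite sum_O. simpl. ring.
  - rewrite sum_Sn, <- IHN. replace (delta (S N) * y ^ S N) with 0 by (simpl; ring). change (1 = 1 + 0). ring.
Qed.

Lemma nested1 n m : nested (z_tail 1 n) m = 1.
Proof. reflexivity. Qed.

Lemma coef1 n k : (1 <= n)%nat ->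
  INR n * PS_derive (A 1 n) k - PS_incr_1 (PS_derive (A 1 n)) k = delta k.
Proof.
  intros Hn. assert (0 < INR n) by (apply lt_0_INR; lia).
  unfold PS_derive, A. destruct k as [|k].
  - simpl PS_incr_1. simpl delta. change (zero : R) with 0. simpl nested.
    simpl pow. field. split; [lra| simpl; lra].
  - cbn [PS_incr_1 delta]. rewrite !nested1.
    assert (0 < INR (S k)) by (apply lt_0_INR; lia).
    assert (0 < INR (S (S k))) by (apply lt_0_INR; lia).
    change ((/ INR n) ^ S (S k)) with (/ INR n * (/ INR n) ^ S k).
    set (p := (/ INR n) ^ S k). field. lra.
Qed.

Lemma coefS j n k : (1 <= n)%nat ->
  INR (S n) * PS_derive (A (S (S j)) (S n)) k - PS_incr_1 (PS_derive (A (S (S j)) (S n))) k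
  = A (S j) n k.
Proof.
  intros Hn. assert (Hn0 : 0 < INR n) by (apply lt_0_INR; lia).
  assert (HSn : INR (S n) = INR n + 1) by apply S_INR.
  unfold PS_derive, A.
  rewrite ZT by lia. replace (S n - 1)%nat with n by lia.
  rewrite HSn. replace (INR n + 1 - 1) with (INR n) by ring.
  destruct k as [|k].
  - simpl PS_incr_1. change (zero : R) with 0. rewrite nested_cons. simpl (seq 1 _).
    unfold lsum. simpl. ring.
  - cbn [PS_incr_1]. rewrite !nested_cons.
    replace (S (S k) - 1)%nat with (S k) by lia. replace (S k - 1)%nat with k by lia.
    rewrite seq_S, lsum_app. replace (1 + k)%nat with (S k) by lia.
    unfold lsum at 2. cbn [map fold_right].
    assert (0 < INR (S k)) by (apply lt_0_INR; lia).
    assert (0 < INR (S (S k))) by (apply lt_0_INR; lia).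
    set (L := lsum _ (seq 1 k)). set (Nz := nested (z_tail (S j) n) (S k)).
    assert (E : (/ (INR n + 1)) ^ S k * ((INR n + 1) / INR n) ^ S k = (/ INR n) ^ S k).
    { rewrite <- Rpow_mult_distr. f_equal. field. lra. }
    change ((/ (INR n + 1)) ^ S (S k)) with (/ (INR n + 1) * (/ (INR n + 1)) ^ S k).
    rewrite <- E. set (p := (/ (INR n + 1)) ^ S k). set (q := ((INR n + 1) / INR n) ^ S k).
    field. lra.
Qed.

Lemma M_deriv j n y : (S j + 1 <= n)%nat -> Rabs y <= 1 ->
  is_derive (M (S j) n) y
    ((match j with O => 1 | S j' => M (S j') (n - 1) y end) / (INR n - y)).
Proof.
  intros Hn Hy.
  set (a := A (S j) n).
  assert (Hr : Rbar_lt (Rabs y) (CV_radius a)).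
  { apply Rbar_lt_le_trans with (Finite (4/3)); [simpl; lra|]. apply A_radius; auto. }
  assert (HD := is_derive_PSeries a y Hr).
  assert (Eb := ex_pseries_derive a y Hr).
  assert (Hny : 0 < INR n - y).
  { assert (INR 2 <= INR n) by (apply le_INR; lia). simpl in H.
    assert (y <= 1) by (apply Rabs_le_between in Hy; lra). lra. }
  set (P := PSeries (PS_derive a) y) in HD.
  assert (Key : (INR n - y) * P = match j with O => 1 | S j' => M (S j') (n - 1) y end).
  { rewrite Rmult_minus_distr_r. unfold P.
    rewrite <- PSeries_scal, <- PSeries_incr_1.
    rewrite <- PSeries_minus.
    2:{ apply ex_pseries_scal; [apply Rmult_comm|exact Eb]. }
    2:{ apply ex_pseries_incr_1; exact Eb. }
    destruct j as [|j].
    - rewrite <- (PSeries_delta y). apply PSeries_ext. intros k.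
      rewrite <- (coef1 n k) by lia. reflexivity.
    - destruct n as [|n]; [lia|]. replace (S n - 1)%nat with n by lia.
      rewrite M_PS. apply PSeries_ext. intros k.
      rewrite <- coefS by lia. reflexivity. }
  apply (is_derive_ext (PSeries a)).
  { intros t. unfold a. symmetry. apply M_PS. }
  replace (_ / (INR n - y)) with P; auto.
  rewrite <- Key. field. lra.
Qed.

Lemma cont_omega omega u : limit1_in omega (fun x => 1 <= x) (omega u) u -> 1 < u ->
  continuity_pt omega u.
Proof.
  intros Hl Hu eps Heps. destruct (Hl eps Heps) as [alp [Ha H]].
  exists (Rmin alp (u - 1)). split; [apply Rmin_pos; lra|].
  intros x [[_ Hxu] Hd]. apply H. simpl in Hd |- *. unfold R_dist in *.
  assert (Hd1 := Rmin_l alp (u - 1)). assert (Hd2 := Rmin_r alp (u - 1)).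
  apply Rabs_lt_between in Hd. split; [lra|]. apply Rabs_lt_between; lra.
Qed.

Lemma dshift x : derivable_pt_lim (fun t => t + 1) x 1.
Proof.
  assert (H := derivable_pt_lim_plus (fun t => t) (fun _ => 1) x 1 0
    (derivable_pt_lim_id x) (derivable_pt_lim_const 1 x)).
  rewrite Rplus_0_r in H. exact H.
Qed.

Lemma sig_deriv omega : is_buchstab omega -> forall u, 1 < u ->
  is_derive (sigmaB omega) u (omega u).
Proof.
  intros [_ [_ Hd]] u Hu.
  assert (H1 := Hd (u + 1) ltac:(lra)). replace (u + 1 - 1) with u in H1 by ring.
  apply is_derive_Reals. unfold sigmaB.
  replace (omega u) with (1 * omega (u + 1) + (u + 1) * ((omega u - omega (u + 1)) / (u + 1))) by (field; lra).
  apply (derivable_pt_lim_mult (fun t => t + 1) (fun t => omega (t + 1))).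
  - apply dshift.
  - rewrite <- (Rmult_1_r ((omega u - omega (u + 1)) / (u + 1))).
    apply (derivable_pt_lim_comp (fun t => t + 1) omega u 1).
    + apply dshift.
    + exact H1.
Qed.

Lemma sig_cont omega : is_buchstab omega -> forall u, 1 <= u -> continuity_pt (sigmaB omega) u.
Proof.
  intros [Hc _] u Hu. unfold sigmaB.
  apply continuity_pt_mult.
  - apply continuity_pt_plus; [apply continuity_pt_id|apply continuity_pt_const; intros ? ?; auto].
  - apply (continuity_pt_comp (fun t => t + 1) omega u).
    + apply continuity_pt_plus; [apply continuity_pt_id|apply continuity_pt_const; intros ? ?; auto].
    + apply cont_omega; [apply Hc|]; lra.
Qed.

Lemma const_lemma f : (forall x, 0 <= x <= 1 -> continuity_pt f x) ->
  (forall x, 0 < x < 1 -> is_derive f x 0) -> forall x, 0 <= x <= 1 -> f x = f 0.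
Proof.
  intros Hc Hd.
  assert (pr : forall x, 0 < x < 1 -> derivable_pt f x).
  { intros x Hx. exists 0. apply is_derive_Reals. auto. }
  intros x Hx.
  apply (null_derivative_loc f 0 1 pr Hc); auto.
  intros y P. apply derive_pt_eq_0. apply is_derive_Reals. auto.
Qed.

Definition Sfun omega n y := sigmaB omega (INR n) + sum_range 1 (n - 1)
      (fun j => (-1) ^ j * sigmaB omega (INR n - INR j) * M j n y).

Definition Dv N a y := match a with O => 0 | S j' =>
  (match j' with O => 1 | S j'' => M (S j'') (N - 1) y end) / (INR N - y) end.

Lemma S_deriv omega N y : (2 <= N)%nat -> Rabs y <= 1 ->
  is_derive (Sfun omega N) y
    (lsum (fun a => (-1) ^ a * sigmaB omega (INR N - INR a) * Dv N a y) (seq 1 (N - 1))).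
Proof.
  intros HN Hy.
  apply (is_derive_ext (fun t => sigmaB omega (INR N) +
      lsum (fun a => (-1) ^ a * sigmaB omega (INR N - INR a) * M a N t) (seq 1 (N - 1)))).
  { intros t. unfold Sfun. rewrite sum_range_1. reflexivity. }
  assert (H0 : is_derive (fun _ : R => sigmaB omega (INR N)) y 0).
  { apply is_derive_Reals, derivable_pt_lim_const. }
  assert (H1 : is_derive (fun t => lsum (fun a => (-1) ^ a * sigmaB omega (INR N - INR a) * M a N t) (seq 1 (N - 1))) y
     (lsum (fun a => (-1) ^ a * sigmaB omega (INR N - INR a) * Dv N a y) (seq 1 (N - 1)))).
  { apply (lsum_derive (fun a t => (-1) ^ a * sigmaB omega (INR N - INR a) * M a N t)
                       (fun a t => (-1) ^ a * sigmaB omega (INR N - INR a) * Dv N a t)).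
    intros a Ha. apply in_seq in Ha. destruct a as [|j]; [lia|].
    assert (HM := M_deriv j N y ltac:(lia) Hy).
    assert (HS := is_derive_scal (M (S j) N) y ((-1) ^ S j * sigmaB omega (INR N - INR (S j))) _ HM).
    exact HS. }
  assert (H2 := is_derive_plus _ _ _ _ _ H0 H1).
  replace (lsum _ (seq 1 (N - 1))) with (plus 0 (lsum (fun a => (-1) ^ a * sigmaB omega (INR N - INR a) * Dv N a y) (seq 1 (N - 1)))).
  - exact H2.
  - change (0 + lsum (fun a => (-1) ^ a * sigmaB omega (INR N - INR a) * Dv N a y) (seq 1 (N - 1)) = lsum (fun a => (-1) ^ a * sigmaB omega (INR N - INR a) * Dv N a y) (seq 1 (N - 1))). ring.
Qed.

Lemma S_alg omega n y : (1 <= n)%nat -> y < 1 ->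
  lsum (fun a => (-1) ^ a * sigmaB omega (INR (S n) - INR a) * Dv (S n) a y) (seq 1 n)
  = - Sfun omega n y / (INR (S n) - y).
Proof.
  intros Hn Hy. destruct n as [|n']; [lia|].
  assert (HNy : 0 < INR (S (S n')) - y).
  { rewrite !S_INR. assert (0 <= INR n') by apply pos_INR. lra. }
  cbn [seq]. unfold lsum at 1. cbn [map fold_right].
  fold (lsum (fun a => (-1) ^ a * sigmaB omega (INR (S (S n'))  - INR a) * Dv (S (S n')) a y) (seq 2 n')).
  rewrite lsum_shift.
  rewrite (lsum_ext _ (fun a => (- / (INR (S (S n')) - y)) * ((-1) ^ a * sigmaB omega (INR (S n') - INR a) * M a (S n') y))).
  2:{ intros a Ha. apply in_seq in Ha. destruct a as [|a]; [lia|].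
      unfold Dv. replace (S (S n') - 1)%nat with (S n') by lia.
      replace (INR (S (S n')) - INR (S (S a))) with (INR (S n') - INR (S a)) by (rewrite !(S_INR (S _)); ring).
      cbn [pow]. unfold Rdiv. ring. }
  rewrite <- lsum_scal.
  unfold Sfun. rewrite sum_range_1. replace (S n' - 1)%nat with n' by lia.
  unfold Dv. replace (INR (S (S n')) - INR 1) with (INR (S n')) by (rewrite (S_INR (S n')); simpl; ring).
  simpl pow. field. lra.
Qed.

Lemma main omega : is_buchstab omega -> forall m y, 0 <= y <= 1 ->
  sigmaB omega (INR (S m) - y) = Sfun omega (S m) y.
Proof.
  intros Hb. assert (Hb' := Hb). destruct Hb' as [Hc [H12 Hd]].
  induction m as [|m IH]; intros y Hy.
  - unfold Sfun. rewrite sum_range_1. replace (1 - 1)%nat with 0%nat by lia.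
    unfold lsum. cbn [seq map fold_right]. unfold sigmaB.
    replace (INR 1) with 1 by reflexivity.
    rewrite (H12 (1 - y + 1)) by lra. rewrite (H12 (1 + 1)) by lra. ring.
  - set (N := S (S m)).
    assert (HN : INR N = INR (S m) + 1) by apply S_INR.
    assert (Hm0 : 0 <= INR m) by apply pos_INR.
    assert (HSm : INR (S m) = INR m + 1) by apply S_INR.
    set (h := fun t => sigmaB omega (INR N - t) - Sfun omega N t).
    assert (Hsd : forall x, Rabs x <= 1 -> is_derive (Sfun omega N) x
       (lsum (fun a => (-1) ^ a * sigmaB omega (INR N - INR a) * Dv N a x) (seq 1 (N - 1)))).
    { intros x Hx. apply S_deriv; auto. unfold N; lia. }
    assert (Hcont : forall x, 0 <= x <= 1 -> continuity_pt h x).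
    { intros x Hx. unfold h. apply continuity_pt_minus.
      - apply (continuity_pt_comp (fun t => INR N - t) (sigmaB omega)).
        + apply continuity_pt_minus; [apply continuity_pt_const; intros ? ?; auto|apply continuity_pt_id].
        + apply sig_cont; auto. lra.
      - apply derivable_continuous_pt.
        exists (lsum (fun a => (-1) ^ a * sigmaB omega (INR N - INR a) * Dv N a x) (seq 1 (N - 1))).
        apply is_derive_Reals. apply Hsd. apply Rabs_le; lra. }
    assert (Hder : forall x, 0 < x < 1 -> is_derive h x 0).
    { intros x Hx.
      assert (D1 : is_derive (fun t => sigmaB omega (INR N - t)) x (- omega (INR N - x))).
      { apply is_derive_Reals.
        replace (- omega (INR N - x)) with (omega (INR N - x) * (-1)) by ring.
        apply (derivable_pt_lim_comp (fun t => INR N - t) (sigmaB omega)).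
        + assert (K := derivable_pt_lim_minus (fun _ => INR N) (fun t => t) x 0 1
             (derivable_pt_lim_const (INR N) x) (derivable_pt_lim_id x)).
          replace (0 - 1) with (-1) in K by ring. exact K.
        + apply is_derive_Reals. apply sig_deriv; auto. lra. }
      assert (D2 := Hsd x ltac:(apply Rabs_le; lra)).
      replace (N - 1)%nat with (S m) in D2 by (unfold N; lia).
      unfold N in D2. rewrite S_alg in D2 by (lia || lra). fold N in D2.
      rewrite <- IH in D2 by lra.
      assert (D := is_derive_minus _ _ _ _ _ D1 D2).
      replace (- sigmaB omega (INR (S m) - x) / (INR N - x)) with (- omega (INR N - x)) in D.
      2:{ unfold sigmaB. replace (INR (S m) - x + 1) with (INR N - x) by lra. field. lra. }
      rewrite minus_eq_zero in D. exact D. }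
    idtac.
    assert (E := const_lemma h Hcont Hder y Hy).
    unfold h in E.
    assert (E0 : Sfun omega N 0 = sigmaB omega (INR N)).
    { unfold Sfun. rewrite sum_range_1, lsum_0; [ring|].
      intros a _. rewrite M_PS, PSeries_0. unfold A. ring. }
    rewrite E0, Rminus_0_r in E. lra.
Qed.

Theorem theorem2 :
  forall omega : R -> R, is_buchstab omega ->
  forall (n : nat) (y : R), (1 <= n)%nat -> 0 <= y <= 1 ->
  sigmaB omega (INR n - y) =
    sigmaB omega (INR n) +
    sum_range 1 (n - 1)
      (fun j => (-1) ^ j * sigmaB omega (INR n - INR j) * M j n y).
Proof.
  intros omega Hb n y Hn Hy. destruct n as [|m]; [lia|].
  apply (main omega Hb m y Hy).
Qed.
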